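(* Let $n$ be even, $k>1$, and let $f=a_1+2a_2+\cdots+2^{k-1}a_k\in\mathcal{GB}_n^{2^k}$ with $a_1,\dots,a_k\in\mathcal{B}_n$ be gbent. Then for every $\mathbf{c}=(c_1,\dots,c_{k-1})\in\mathbb{F}_2^{k-1}$ the Boolean function $g_{\mathbf{c}}=c_1a_1\oplus c_2a_2\oplus\cdots\oplus c_{k-1}a_{k-1}\oplus a_k$ is bent.
   Context: $\mathcal{B}_n$: Boolean functions $\mathbb{F}_2^n\to\mathbb{F}_2$; $\mathcal{GB}_n^q$: functions $\mathbb{F}_2^n\to\mathbb{Z}_q$; every $f\in\mathcal{GB}_n^{2^k}$ is uniquely written as $f=\sum_{i=1}^k 2^{i-1}a_i$ (binary digits, $a_i\in\mathcal{B}_n$). $\mathcal{H}^{(q)}_f(\mathbf{u})=\sum_{\mathbf{x}}\zeta_q^{f(\mathbf{x})}(-1)^{\mathbf{u}\cdot\mathbf{x}}$ with $\zeta_q=e^{2\pi i/q}$; $f$ is gbent if $|\mathcal{H}^{(q)}_f(\mathbf{u})|=2^{n/2}$ for all $\mathbf{u}$. $g\in\mathcal{B}_n$ is bent if $|\sum_{\mathbf{x}}(-1)^{g(\mathbf{x})+\mathbf{u}\cdot\mathbf{x}}|=2^{n/2}$ for all $\mathbf{u}$. *)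

(* Defs.v *)
From HB Require Import structures.
From mathcomp Require Import all_boot all_order all_algebra all_field.
Set Implicit Arguments. Unset Strict Implicit. Unset Printing Implicit Defensive.
Import Order.TTheory GRing.Theory Num.Theory.
Local Open Scope ring_scope.

Definition vec (n : nat) := 'rV['F_2]_n.

Definition boolfun (n : nat) := vec n -> 'F_2.

Definition dotF2 (n : nat) (u x : vec n) : 'F_2 := \sum_(i < n) u 0 i * x 0 i.

Definition sgn (b : 'F_2) : algC := (-1) ^+ (nat_of_ord b).

Definition walsh (n : nat) (g : boolfun n) (u : vec n) : algC :=
  \sum_(x : vec n) sgn (g x + dotF2 u x).

Definition is_bent (n : nat) (g : boolfun n) : Prop :=
  forall u : vec n, `|walsh g u| = sqrtC (2%:R ^+ n).

(* generalized Boolean function into Z_q, represented by a natural-number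
   valued function (values taken modulo q, through zeta ^+ _ with zeta^q = 1) *)
Definition gwalsh (n : nat) (zeta : algC) (f : vec n -> nat) (u : vec n) : algC :=
  \sum_(x : vec n) zeta ^+ (f x) * sgn (dotF2 u x).

Definition is_gbent (n : nat) (zeta : algC) (f : vec n -> nat) : Prop :=
  forall u : vec n, `|gwalsh zeta f u| = sqrtC (2%:R ^+ n).

(* f = a_1 + 2 a_2 + ... + 2^(k-1) a_k, with a_(i+1) = a i for i : 'I_k *)
Definition gb_of_digits (n k : nat) (a : 'I_k -> boolfun n) : vec n -> nat :=
  fun x => (\sum_(i < k) 2 ^ i * nat_of_ord (a i x))%N.

(* a_(i+1) as a function of the natural index i (0 outside 0 <= i < k) *)
Definition digit (n k : nat) (a : 'I_k -> boolfun n) (i : nat) : boolfun n :=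
  fun x => if insub i is Some j then a j x else 0.

(* g_c = c_1 a_1 + ... + c_(k-1) a_(k-1) + a_k, with c_(i+1) = c i *)
Definition gc_fun (n k : nat) (a : 'I_k -> boolfun n) (c : 'I_k.-1 -> 'F_2)
  : boolfun n :=
  fun x => \sum_(i < k.-1) c i * digit a i x + digit a k.-1 x.

(* Main.v *)
Require Import Defs.
From HB Require Import structures.
From mathcomp Require Import all_boot all_order all_algebra all_field.
From mathcomp Require Import zify ring lra.
Set Implicit Arguments. Unset Strict Implicit. Unset Printing Implicit Defensive.
Import Order.TTheory GRing.Theory Num.Theory.
Local Open Scope ring_scope.

Section Cyc.
Variable K : nat.
Hypothesis K0 : (0 < K)%N.
Let M := (2 ^ K)%N.
Variable z : algC.
Hypothesis hz : (2 * M)%N.-primitive_root z.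

Lemma M_gt0 : (0 < M)%N.
Proof. by rewrite /M expn_gt0. Qed.

Lemma z2M : z ^+ (2 * M) = 1.
Proof. exact: prim_expr_order hz. Qed.

Lemma zM : z ^+ M = -1.
Proof.
have : (z ^+ M) ^+ 2 == 1 by rewrite -exprM mulnC z2M.
rewrite sqrf_eq1 => /orP [|/eqP //].
rewrite -(prim_order_dvd hz) => H.
have := dvdn_leq M_gt0 H; rewrite -{2}(mul1n M) leq_mul2r; have := M_gt0; lia.
Qed.

Lemma norm_root (v : algC) : v ^+ (2 * M) = 1 -> `|v| = 1.
Proof.
move=> hv; apply/eqP; rewrite -(pexpr_eq1 (n := (2 * M)%N)) //.
  by rewrite -normrX hv normr1.
by rewrite muln_gt0 M_gt0.
Qed.

Lemma conj_pow (v : algC) (t : nat) : v ^+ (2 * M) = 1 -> (t <= 2 * M)%N ->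
  (v ^+ t)^* = v ^+ (2 * M - t).
Proof.
move=> hv ht.
have v0 : v != 0 by apply/eqP => v0; move: hv; rewrite v0 expr0n muln_eq0 /=; have := M_gt0; case: (M) => //= m _ /eqP; rewrite eq_sym oner_eq0.
have cv : v^* = v^-1 by rewrite invC_norm norm_root // expr1n invr1 mul1r.
have -> : (v ^+ t)^* = (v^*) ^+ t by rewrite rmorphXn.
rewrite cv exprVn.
have [->|ltt] := eqVneq t (2 * M)%N; first by rewrite subnn hv invr1 expr0.
rewrite expfB; last by rewrite ltn_neqAle ltt ht.
by rewrite hv mul1r.
Qed.

Lemma geo_sum (e : nat) : (M < e)%N -> (e < 3 * M)%N ->
  \sum_(i < M) (z ^+ (2 * i + 1)) ^+ e = if e == (2 * M)%N then M%:R else 0.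
Proof.
move=> h1 h2.
have [->|ne] := eqVneq e (2 * M)%N.
  under eq_bigr => i _ do rewrite -exprM mulnC exprM z2M expr1n.
  by rewrite sumr_const card_ord.
under eq_bigr => i _ do
  (have -> : (z ^+ (2 * i + 1)) ^+ e = z ^+ e * (z ^+ (2 * e)) ^+ i by
     rewrite -!exprM -exprD; congr (_ ^+ _); lia).
rewrite -mulr_sumr.
set q := z ^+ (2 * e).
have q1 : q != 1.
  rewrite /q -(prim_order_dvd hz) dvdn_pmul2l //.
  apply/negP => /dvdnP [c hc].
  move: h1 h2 ne; rewrite hc => h1 h2 ne.
  have c1 : (1 < c)%N by rewrite -(ltn_pmul2r M_gt0) mul1n.
  have c3 : (c < 3)%N by rewrite -(ltn_pmul2r M_gt0).
  have c2 : c = 2%N by lia.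
  by move: ne; rewrite c2 mulnC eqxx.
have qM : q ^+ M = 1 by rewrite /q -exprM mulnAC exprM z2M expr1n.
have : (q - 1) * (\sum_(i < M) q ^+ i) = 0 by rewrite -subrX1 qM subrr.
by move/eqP; rewrite mulf_eq0 subr_eq0 (negbTE q1) /= => /eqP ->; rewrite mulr0.
Qed.

Definition evj (v : algC) (d : 'I_M -> int) : algC :=
  \sum_(t < M) (d t)%:~R * v ^+ t.

Lemma orth (d : 'I_M -> int) :
  \sum_(i < M) `|evj (z ^+ (2 * i + 1)) d| ^+ 2 =
  M%:R * \sum_(t < M) (d t)%:~R ^+ 2.
Proof.
have step : forall i : 'I_M, `|evj (z ^+ (2 * i + 1)) d| ^+ 2 =
   \sum_(s < M) \sum_(t < M) (d s)%:~R * (d t)%:~R *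
       (z ^+ (2 * i + 1)) ^+ (s + (2 * M - t)).
  move=> i; set v := z ^+ (2 * i + 1).
  have hv : v ^+ (2 * M) = 1 by rewrite /v -exprM mulnC exprM z2M expr1n.
  rewrite normCK /evj rmorph_sum big_distrl /=; apply: eq_bigr => s _.
  rewrite big_distrr /=; apply: eq_bigr => t _.
  rewrite rmorphM /= rmorph_int.
  have -> : (v ^+ t)^* = v ^+ (2 * M - t).
    by apply: conj_pow => //; have := ltn_ord t; lia.
  by rewrite exprD; ring.
under eq_bigr => i _ do rewrite step.
rewrite exchange_big /=.
rewrite big_distrr /=; apply: eq_bigr => s _.
rewrite exchange_big /=.
rewrite (bigD1 s) //= [X in _ + X]big1 ?addr0.
  have -> : (s + (2 * M - s) = 2 * M)%N by have := ltn_ord s; lia.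
  rewrite -mulr_sumr geo_sum ?eqxx; first by rewrite mulrC expr2.
    by have := M_gt0; lia.
  by have := M_gt0; lia.
move=> t ts; rewrite -mulr_sumr geo_sum; first last.
    by have := ltn_ord s; have := ltn_ord t; lia.
  by have := ltn_ord s; have := ltn_ord t; have := M_gt0; lia.
case: eqP; last by rewrite mulr0.
move=> h; exfalso; move: ts; rewrite -val_eqE /=; have := ltn_ord t; have := ltn_ord s; lia.
Qed.

Lemma ch2 : (2%N \in [pchar 'F_2]).
Proof. exact: (pchar_Fp (isT : prime 2)). Qed.

Lemma oppF2 (x : 'F_2) : - x = x.
Proof. exact: (oppr_pchar2 ch2). Qed.

Lemma signF2 (b : nat) : ((-1) ^+ b : int)%:~R = 1 :> 'F_2.
Proof. by rewrite rmorphXn /= rmorphN1 oppF2 expr1n. Qed.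

Definition ev (d : 'I_M -> int) : algC := evj z d.
Definition par (d : 'I_M -> int) : 'F_2 := \sum_(t < M) (d t)%:~R.

Definition rep (m : nat) : 'I_M -> int :=
  fun t => if val t == (m %% M)%N then (-1) ^+ (m %/ M)%N else 0.

Lemma ev_rep m : ev (rep m) = z ^+ m.
Proof.
rewrite /ev /evj (bigD1 (Ordinal (ltn_pmod m M_gt0))) //= big1.
  rewrite /rep /= eqxx addr0 {3}(divn_eq m M) exprD mulnC exprM zM.
  by rewrite rmorphXn /= rmorphN1.
move=> t /negbTE; rewrite -val_eqE /= /rep => ->; by rewrite mul0r.
Qed.

Lemma par_rep m : par (rep m) = 1.
Proof.
rewrite /par (bigD1 (Ordinal (ltn_pmod m M_gt0))) //= big1.
  by rewrite /rep /= eqxx addr0 signF2.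
by move=> t /negbTE; rewrite -val_eqE /= /rep => ->.
Qed.

Lemma form (I : finType) (c : I -> int) (m : I -> nat) :
  exists d, \sum_i (c i)%:~R * z ^+ (m i) = ev d /\
            par d = \sum_i (c i)%:~R.
Proof.
exists (fun t => \sum_i c i * rep (m i) t); split.
  rewrite /ev /evj.
  under [RHS]eq_bigr => t _ do rewrite rmorph_sum /= mulr_suml.
  rewrite exchange_big /=; apply: eq_bigr => i _.
  rewrite -ev_rep /ev /evj mulr_sumr; apply: eq_bigr => t _.
  by rewrite rmorphM /= mulrA.
rewrite /par.
under eq_bigr => t _ do rewrite rmorph_sum.
rewrite exchange_big /=; apply: eq_bigr => i _.
under eq_bigr => t _ do rewrite rmorphM.
by rewrite -mulr_sumr; have := par_rep (m i); rewrite /par => ->; rewrite mulr1.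
Qed.

Definition R (x : algC) (b : 'F_2) := exists d, x = ev d /\ par d = b.

Lemma R_form (I : finType) (c : I -> int) (m : I -> nat) :
  R (\sum_i (c i)%:~R * z ^+ (m i)) (\sum_i (c i)%:~R).
Proof. by have [d [h1 h2]] := form c m; exists d. Qed.

Lemma R_z m : R (z ^+ m) 1.
Proof. by exists (rep m); rewrite ev_rep par_rep. Qed.

Lemma R_int (c : int) : R c%:~R c%:~R.
Proof.
have := R_form (fun _ : 'I_1 => c) (fun _ => 0%N).
by rewrite !big_ord1 expr0 mulr1.
Qed.

Lemma R_add x y b b' : R x b -> R y b' -> R (x + y) (b + b').
Proof.
move=> [d [-> <-]] [e [-> <-]]; exists (fun t => d t + e t); split.
  by rewrite /ev /evj -big_split; apply: eq_bigr => t _; rewrite rmorphD mulrDl.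
by rewrite /par -big_split; apply: eq_bigr => t _; rewrite rmorphD.
Qed.

Lemma R_opp x b : R x b -> R (- x) b.
Proof.
move=> [d [-> <-]]; exists (fun t => - d t); split.
  by rewrite /ev /evj -sumrN; apply: eq_bigr => t _; rewrite rmorphN mulNr.
by rewrite /par; apply: eq_bigr => t _; rewrite rmorphN oppF2.
Qed.

Lemma R_mul x y b b' : R x b -> R y b' -> R (x * y) (b * b').
Proof.
move=> [d [-> <-]] [e [-> <-]].
have := R_form (fun p : 'I_M * 'I_M => d p.1 * e p.2) (fun p => (val p.1 + val p.2)%N).
rewrite -(pair_bigA _ (fun s t : 'I_M => (d s * e t)%:~R * z ^+ (s + t)%N)).
rewrite -(pair_bigA _ (fun s t : 'I_M => (d s * e t)%:~R : 'F_2)).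
rewrite /ev /evj /par big_distrlr big_distrlr /=.
congr R; apply: eq_bigr => s _; apply: eq_bigr => t _.
  by rewrite rmorphM exprD; ring.
by rewrite rmorphM.
Qed.

Lemma R_conj x b : R x b -> R x^* b.
Proof.
move=> [d [-> <-]].
have := R_form d (fun t : 'I_M => (2 * M - t)%N).
congr R; rewrite /ev /evj rmorph_sum; apply: eq_bigr => t _.
rewrite rmorphM /= rmorph_int.
have -> : (z ^+ t)^* = z ^+ (2 * M - t) by apply: conj_pow; [exact: z2M | have := ltn_ord t; lia].
by [].
Qed.

Lemma R_exp x b m : R x b -> R (x ^+ m) (b ^+ m).
Proof.
move=> h; elim: m => [|m IH]; first by rewrite !expr0; have := R_int 1; rewrite !rmorph1.
by rewrite !exprS; apply: R_mul.
Qed.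

Definition Zz x := exists b, R x b.

Lemma Zz_add x y : Zz x -> Zz y -> Zz (x + y).
Proof. by move=> [b h] [b' h']; exists (b + b'); apply: R_add. Qed.
Lemma Zz_mul x y : Zz x -> Zz y -> Zz (x * y).
Proof. by move=> [b h] [b' h']; exists (b * b'); apply: R_mul. Qed.
Lemma Zz_opp x : Zz x -> Zz (- x).
Proof. by move=> [b h]; exists b; apply: R_opp. Qed.
Lemma Zz_z m : Zz (z ^+ m).
Proof. by exists 1; apply: R_z. Qed.
Lemma Zz_int c : Zz c%:~R.
Proof. by exists c%:~R; apply: R_int. Qed.
Lemma Zz_sum (I : finType) (P : pred I) (F : I -> algC) :
  (forall i, Zz (F i)) -> Zz (\sum_(i | P i) F i).
Proof.
move=> h; apply: (big_ind Zz) => //; last exact: Zz_add.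
by have := Zz_int 0; rewrite rmorph0.
Qed.

Lemma aut_ex (i : nat) : exists u : {rmorphism algC -> algC}, u z = z ^+ (2 * i + 1).
Proof.
have co : coprime (2 * i + 1) (2 * M).
  rewrite /M -expnS; apply: coprimeXr; rewrite coprimen2 oddD oddM; by [].
have [u hu] := Qn_aut_exists co.
by exists u; apply: hu; exact: z2M.
Qed.

Lemma u_ev (u : {rmorphism algC -> algC}) d : u (ev d) = evj (u z) d.
Proof.
rewrite /ev /evj rmorph_sum; apply: eq_bigr => t _.
by rewrite rmorphM rmorph_int rmorphXn.
Qed.

Lemma sum_sq_int (f : 'I_M -> int) :
  \sum_(t < M) (f t)%:~R ^+ 2 = ((\sum_(t < M) f t ^+ 2)%:~R : algC).
Proof. by rewrite rmorph_sum; apply: eq_bigr => t _; rewrite rmorphXn. Qed.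

Lemma ev_inj d e : ev d = ev e -> forall t, d t = e t.
Proof.
move=> h.
pose f := fun t => d t - e t.
have hf : ev f = 0.
  rewrite /ev /evj /f; under eq_bigr => t _ do rewrite rmorphB mulrBl.
  by rewrite sumrB -/(evj z d) -/(evj z e) -/(ev d) -/(ev e) h subrr.
have h0 : forall i : 'I_M, `|evj (z ^+ (2 * i + 1)) f| ^+ 2 = 0.
  move=> i; have [u hu] := aut_ex i.
  by rewrite -hu -u_ev hf rmorph0 normr0 expr0n.
have := orth f; rewrite big1 // => /esym /eqP; rewrite mulf_eq0 pnatr_eq0.
have -> : (M == 0%N) = false by apply/negbTE; rewrite -lt0n M_gt0.
rewrite /= sum_sq_int intr_eq0 psumr_eq0 /=; last by move=> t _; exact: sqr_ge0.
move=> /allP hall t; have := hall t (mem_index_enum t).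
by rewrite sqrf_eq0 subr_eq0 => /eqP.
Qed.

Lemma R_uniq x b b' : R x b -> R x b' -> b = b'.
Proof.
move=> [d [-> <-]] [e [h <-]].
by rewrite /par; apply: eq_bigr => t _; rewrite (ev_inj h).
Qed.

Lemma two_F2 : (2%:R : 'F_2) = 0.
Proof. exact: (pchar_Fp_0 (isT : prime 2)). Qed.

Lemma R_pi : R (1 - z) 0.
Proof.
have := R_add (R_int 1) (R_opp (R_z 1)).
by rewrite !rmorph1 expr1 -(natrD _ 1 1) two_F2.
Qed.

Lemma pi_ne0 : 1 - z != 0.
Proof.
rewrite subr_eq0 eq_sym -[z]expr1 -(prim_order_dvd hz).
apply/negP => /dvdn_leq; have := M_gt0; lia.
Qed.

Lemma two_pi : 2%:R = (1 - z) * \sum_(i < M) z ^+ i.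
Proof.
have := subrX1 z M; rewrite zM => h.
by rewrite -opprB mulNr -h; ring.
Qed.

Lemma div_pi x : R x 0 -> exists y, Zz y /\ x = (1 - z) * y.
Proof.
move=> [d [-> hp]].
have hs : ((\sum_(t < M) d t)%:~R : 'F_2) = 0 by rewrite rmorph_sum.
move: hs => /eqP; rewrite -(dvdz_pcharf ch2) => /dvdzP [q hq].
exists (q%:~R * \sum_(i < M) z ^+ i -
        \sum_(t < M) (d t)%:~R * \sum_(i < t) z ^+ i).
split.
  apply: Zz_add; first apply: Zz_mul; first exact: Zz_int.
    by apply: Zz_sum => i; apply: Zz_z.
  apply: Zz_opp; apply: Zz_sum => t; apply: Zz_mul; first exact: Zz_int.
  by apply: Zz_sum => i; apply: Zz_z.
rewrite mulrBr mulrCA -two_pi mulr_sumr.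
have -> : \sum_(t < M) (1 - z) * ((d t)%:~R * \sum_(i < t) z ^+ i) =
          \sum_(t < M) ((d t)%:~R - (d t)%:~R * z ^+ t).
  apply: eq_bigr => t _; rewrite mulrCA -opprB mulNr -subrX1; ring.
rewrite sumrB -rmorph_sum hq rmorphM /= -/(evj z d) -/(ev d).
have -> : ((2%:Z)%:~R : algC) = 2%:R by [].
ring.
Qed.

Lemma R_two : R 2%:R 0.
Proof.
have := R_int 2%:Z.
have -> : ((2%:Z)%:~R : algC) = 2%:R by [].
have -> : ((2%:Z)%:~R : 'F_2) = 2%:R by [].
by rewrite two_F2.
Qed.

Lemma R_one : R 1 1.
Proof. by have := R_int 1; rewrite !rmorph1. Qed.

Lemma pi_pow2 b : (b <= K)%N ->
  exists w, R w 0 /\ (1 - z) ^+ (2 ^ b) = (1 - z ^+ (2 ^ b)) + 2%:R * w.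
Proof.
elim: b => [_|b IH hb].
  exists 0; split; first by have := R_int 0; rewrite !rmorph0.
  by rewrite expn0 !expr1 mulr0 addr0.
have [w [hw e]] := IH (ltnW hb).
set y := z ^+ (2 ^ b).
exists (y ^+ 2 - y + 2%:R * w * (1 - y) + 2%:R * w ^+ 2); split.
  have := R_add (R_add (R_add (R_z (2 ^ b * 2)) (R_opp (R_z (2 ^ b))))
     (R_mul (R_mul R_two hw) (R_add R_one (R_opp (R_z (2 ^ b))))))
     (R_mul R_two (R_exp 2 hw)).
  rewrite exprM -/y.
  have -> : (1 : 'F_2) + 1 = 0 by rewrite -(natrD _ 1 1) two_F2.
  by rewrite !mul0r !addr0.
rewrite expnSr exprM e exprM -/y; ring.
Qed.

Lemma F2_cases (b : 'F_2) : b = 0 \/ b = 1.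
Proof.
case: b => [[|[|m]]] hm; first by left; apply: val_inj.
  by right; apply: val_inj.
by [].
Qed.

Lemma zcz : z^* * z = 1.
Proof. by rewrite -normCKC norm_root ?expr1n // z2M. Qed.

Lemma val_main (D : 'I_M -> int) (n2 : nat) :
  ev D * (ev D)^* = 2%:R ^+ (2 * n2) ->
  exists V, Zz V /\ ev D = 2%:R ^+ n2 * V.
Proof.
move=> hH; set H := ev D in hH *; set p := 1 - z.
have [w [hw hpi]] := pi_pow2 (leqnn K).
rewrite -/M zM opprK -/p in hpi.
have hpi' : p ^+ M = 2%:R * (1 + w) by rewrite hpi; ring.
set Y := (1 + w) ^+ (2 * n2).
have hY : R Y 1.
  by have := R_exp (2 * n2) (R_add R_one hw); rewrite addr0 expr1n.
have hPY : p ^+ (M * (2 * n2)) = 2%:R ^+ (2 * n2) * Y.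
  by rewrite exprM hpi' exprMn.
have conjp : p^* = - z^* * p.
  rewrite /p rmorphB rmorph1 /= mulrBr mulr1 mulNr zcz; ring.
have keq : forall r G, H = p ^+ r * G ->
    p ^+ (M * (2 * n2)) = p ^+ (2 * r) * (G * ((- z^*) ^+ r * G^*) * Y).
  move=> r G hG; rewrite hPY -hH hG rmorphM rmorphXn /= conjp exprMn.
  rewrite mul2n -addnn exprD; ring.
have pn0 : forall m, p ^+ m != 0 by move=> m; rewrite expf_neq0 // pi_ne0.
have bound : forall r G, Zz G -> H = p ^+ r * G -> (2 * r <= M * (2 * n2))%N.
  move=> r G [bG hGb] hG; rewrite leqNgt; apply/negP => lt.
  have := keq r G hG.
  have -> : (2 * r = M * (2 * n2) + (2 * r - M * (2 * n2)))%N by lia.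
  rewrite exprD -mulrA -{1}[p ^+ (M * (2 * n2))]mulr1 => /mulfI h.
  have {h} h := h (pn0 _).
  have hR := R_mul (R_mul (R_exp (2 * r - M * (2 * n2)) R_pi)
       (R_mul hGb (R_mul (R_exp r (R_opp (R_conj (R_z 1)))) (R_conj hGb)))) hY.
  rewrite -mulrA -h expr0n in hR.
  have e0 : (2 * r - M * (2 * n2))%N == 0%N = false by apply/negbTE; lia.
  rewrite e0 in hR; rewrite !mul0r in hR.
  by have := R_uniq hR R_one => /eqP; rewrite eq_sym oner_eq0.
have desc : forall m r G, (M * (2 * n2) - 2 * r <= m)%N -> Zz G -> H = p ^+ r * G ->
    exists r' G', R G' 1 /\ H = p ^+ r' * G'.
  elim=> [|m IH] r G hm [bG hGb] hG.
  { case: (F2_cases bG) => hb; last by exists r, G; rewrite -hb.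
    rewrite hb in hGb; have [G' [hZ' hG']] := div_pi hGb.
    have hG2 : H = p ^+ r.+1 * G' by rewrite hG hG' exprSr -mulrA.
    have := bound _ _ hZ' hG2; lia. }
  case: (F2_cases bG) => hb; last by exists r, G; rewrite -hb.
  rewrite hb in hGb; have [G' [hZ' hG']] := div_pi hGb.
  have hG2 : H = p ^+ r.+1 * G' by rewrite hG hG' exprSr -mulrA.
  have := bound _ _ hZ' hG2.
  move=> hb2; apply: (IH r.+1 G') => //; lia.
have hH0 : H = p ^+ 0 * H by rewrite expr0 mul1r.
have hZH : Zz H by exists (par D); exists D.
have [r [G [hGb hG]]] := desc (M * (2 * n2))%N 0%N H (leq_subr _ _) hZH hH0.
have hb := bound r G (ex_intro _ _ hGb) hG.
have hr : (2 * r = M * (2 * n2))%N.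
  apply/eqP; rewrite eqn_leq hb /= leqNgt; apply/negP => lt.
  have := keq r G hG.
  have -> : (M * (2 * n2) = 2 * r + (M * (2 * n2) - 2 * r))%N by lia.
  rewrite exprD => /mulfI h; have {h} h := h (pn0 _).
  have hR := R_mul (R_mul hGb (R_mul (R_exp r (R_opp (R_conj (R_z 1)))) (R_conj hGb))) hY.
  rewrite -h expr1n !mulr1 in hR.
  have hR0 := R_exp (M * (2 * n2) - 2 * r) R_pi.
  rewrite expr0n in hR0.
  have e0 : (M * (2 * n2) - 2 * r)%N == 0%N = false by apply/negbTE; lia.
  rewrite e0 in hR0.
  by have := R_uniq hR hR0 => /eqP; rewrite oner_eq0.
have er : r = (M * n2)%N by lia.
rewrite er in hG.
exists ((1 + w) ^+ n2 * G); split.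
  exists (1 ^+ n2 * 1); apply: R_mul => //.
  by have := R_exp n2 (R_add R_one hw); rewrite addr0.
by rewrite hG exprM hpi' exprMn mulrA.
Qed.

Lemma conj_evj (v : algC) d : v ^+ (2 * M) = 1 ->
  (evj v d)^* = \sum_(t < M) (d t)%:~R * v ^+ (2 * M - t).
Proof.
move=> hv; rewrite /evj rmorph_sum; apply: eq_bigr => t _.
rewrite rmorphM /= rmorph_int.
have -> : (v ^+ t)^* = v ^+ (2 * M - t) by apply: conj_pow => //; have := ltn_ord t; lia.
by [].
Qed.

Lemma ev_scale (c : int) d : c%:~R * ev d = ev (fun t => c * d t).
Proof.
rewrite /ev /evj mulr_sumr; apply: eq_bigr => t _; by rewrite rmorphM mulrA.
Qed.

Lemma key (D : 'I_M -> int) (n2 : nat) :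
  ev D * (ev D)^* = 2%:R ^+ (2 * n2) ->
  exists v : 'I_M -> int, (forall t, D t = 2 ^+ n2 * v t) /\
     \sum_(t < M) v t ^+ 2 = 1.
Proof.
move=> hH.
have [V [[bV [v [hV _]]] hDV]] := val_main hH.
have hD : forall t, D t = 2 ^+ n2 * v t.
  have e1 : ev D = ev (fun t => 2 ^+ n2 * v t).
    by rewrite hDV hV -ev_scale rmorphXn.
  by move=> t; exact: (ev_inj e1 t).
exists v; split => //.
have hsq : \sum_(t < M) (D t)%:~R ^+ 2 = (2%:R ^+ (2 * n2) : algC).
  have := orth D.
  have -> : \sum_(i < M) `|evj (z ^+ (2 * i + 1)) D| ^+ 2 =
            \sum_(i < M) (2%:R ^+ (2 * n2) : algC).
    apply: eq_bigr => i _; have [u hu] := aut_ex i.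
    have hv : (u z) ^+ (2 * M) = 1 by rewrite -rmorphXn z2M rmorph1.
    rewrite normCK -hu.
    have -> : (evj (u z) D)^* = \sum_(t < M) (D t)%:~R * (u z) ^+ (2 * M - t).
      by apply: conj_evj.
    have -> : (2%:R ^+ (2 * n2) : algC) = u (2%:R ^+ (2 * n2)) by rewrite rmorphXn rmorph_nat.
    rewrite -hH rmorphM /= -u_ev; congr (_ * _).
    have -> : (ev D)^* = \sum_(t < M) (D t)%:~R * z ^+ (2 * M - t) by apply: conj_evj; exact: z2M.
    rewrite rmorph_sum; apply: eq_bigr => t _.
    by rewrite rmorphM rmorph_int rmorphXn.
  rewrite sumr_const card_ord => h.
  have hM : (M%:R : algC) != 0 by rewrite pnatr_eq0 -lt0n M_gt0.
  have : (M%:R : algC) * (\sum_(t < M) (D t)%:~R ^+ 2 - 2%:R ^+ (2 * n2)) = 0.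
    by rewrite mulrBr -h mulr_natl subrr.
  by move/eqP; rewrite mulf_eq0 (negbTE hM) /= subr_eq0 => /eqP.
move: hsq; rewrite sum_sq_int.
have -> : \sum_(t < M) D t ^+ 2 = 2 ^+ (2 * n2) * \sum_(t < M) v t ^+ 2.
  rewrite mulr_sumr; apply: eq_bigr => t _; rewrite hD exprMn -exprM mulnC exprM.
  by [].
rewrite rmorphM rmorphXn /= => h.
have : (2%:R ^+ (2 * n2) : algC) * ((\sum_(t < M) v t ^+ 2)%:~R - 1) = 0.
  by rewrite mulrBr mulr1 h subrr.
move/eqP; rewrite mulf_eq0 expf_eq0 pnatr_eq0 andbF /= subr_eq0 => /eqP.
by rewrite -(rmorph1 (intr : int -> algC)); move/intr_inj.
Qed.
End Cyc.

Lemma bits_lt (L : nat) (b : nat -> nat) : (forall j, b j <= 1)%N ->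
  (\sum_(j < L) 2 ^ j * b j < 2 ^ L)%N.
Proof.
elim: L b => [|L IH] b hb; first by rewrite big_ord0.
rewrite big_ord_recl /= expn0 mul1n.
have -> : (\sum_(i < L) 2 ^ (bump 0 i) * b (bump 0 i) =
          2 * \sum_(i < L) 2 ^ i * b i.+1)%N.
  by rewrite big_distrr /=; apply: eq_bigr => i _; rewrite /bump /= add1n expnS mulnA.
have := IH (fun j => b j.+1) (fun j => hb j.+1); have := hb 0%N; rewrite expnS; lia.
Qed.

Lemma bits_get (L : nat) (b : nat -> nat) : (forall j, b j <= 1)%N ->
  forall i, (i < L)%N -> ((\sum_(j < L) 2 ^ j * b j) %/ 2 ^ i %% 2 = b i)%N.
Proof.
elim: L b => [|L IH] b hb i hi; first by [].
rewrite big_ord_recl /= expn0 mul1n.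
have -> : (\sum_(i < L) 2 ^ (bump 0 i) * b (bump 0 i) =
          (\sum_(i < L) 2 ^ i * b i.+1) * 2)%N.
  by rewrite big_distrl /=; apply: eq_bigr => j _; rewrite /bump /= add1n expnS; lia.
case: i hi => [|i] hi.
  rewrite expn0 divn1 addnC modnMDl; have := hb 0%N; case: (b 0%N) => [|[|]] //.
rewrite expnS divnMA addnC divnMDl //.
have -> : (b 0%N %/ 2 = 0)%N by apply: divn_small; have := hb 0%N; lia.
rewrite addn0.
exact: (IH (fun j => b j.+1) (fun j => hb j.+1) i).
Qed.

Lemma F2_lt2 (b : 'F_2) : (val b < 2)%N.
Proof. exact: ltn_ord b. Qed.

Lemma F2_natr (b : 'F_2) : (val b)%:R = b.
Proof. by case: (F2_cases b) => ->. Qed.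

Lemma sgnD (b1 b2 : 'F_2) : sgn (b1 + b2) = sgn b1 * sgn b2.
Proof.
by case: (F2_cases b1) => ->; case: (F2_cases b2) => ->; rewrite /sgn /= ?expr0 ?expr1 ?mulr1 ?mul1r ?mulrNN ?mulr1.
Qed.

Unset Implicit Arguments.

Theorem mainTheorem13 (n k : nat) (zeta : algC)
  (hzeta : (2 ^ k)%N.-primitive_root zeta)
  (hn : ~~ odd n) (hk : (1 < k)%N)
  (a : 'I_k -> boolfun n)
  (hf : is_gbent zeta (gb_of_digits a)) :
  forall c : 'I_k.-1 -> 'F_2, is_bent (gc_fun a c).
Proof.
case: k hzeta hk a hf => [|K] // hzeta hk a hf c u.
have K0 : (0 < K)%N by [].
have hz : (2 * 2 ^ K)%N.-primitive_root zeta by rewrite -expnS.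
set M := (2 ^ K)%N in hz.
pose low x := (\sum_(j < K) 2 ^ j * val (digit a j x))%N.
have hdig : forall x j, (val (digit a j x) <= 1)%N.
  by move=> x j; have := F2_lt2 (digit a j x); lia.
have low_lt : forall x, (low x < M)%N.
  move=> x; rewrite /low /M; exact: (bits_lt K (hdig x)).
pose lo x : 'I_M := Ordinal (low_lt x).
pose top x := digit a K x.
have dig_ord : forall (i : 'I_K.+1) x, digit a i x = a i x.
  by move=> i x; rewrite /digit valK.
have hfx : forall x, gb_of_digits a x = (low x + 2 ^ K * val (top x))%N.
  move=> x; rewrite /gb_of_digits big_ord_recr /=.
  congr (_ + _)%N; last by rewrite /top -(dig_ord ord_max).
  apply: eq_bigr => j _; by rewrite -(dig_ord (widen_ord (leqnSn K) j)).
have hzx : forall x, zeta ^+ gb_of_digits a x = zeta ^+ low x * sgn (top x).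
  by move=> x; rewrite hfx exprD exprM (zM K0 hz).
set H := gwalsh zeta (gb_of_digits a) u.
have hn2 : n = (2 * n./2)%N.
  by rewrite -[n in LHS](odd_double_half n) (negbTE hn) add0n -mul2n.
have hH2 : H * H^* = 2%:R ^+ (2 * n./2).
  by rewrite -normCK hf sqrtCK -hn2.
pose D t : int := \sum_(x | lo x == t) (-1) ^+ (val (top x + dotF2 u x)).
have sgnE : forall b : 'F_2, sgn b = (((-1) ^+ val b : int))%:~R.
  by move=> b; rewrite /sgn rmorphXn /= rmorphN1.
have hD : ev zeta D = H.
  rewrite /H /gwalsh (partition_big lo xpredT) //=.
  rewrite /ev /evj; apply: eq_bigr => t _.
  rewrite /D rmorph_sum mulr_suml; apply: eq_bigr => x /eqP <-.
  by rewrite hzx -mulrA -sgnD sgnE mulrC.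
have [v [hv hs]] := key K0 hz (D := D) (n2 := n./2) (ltac:(by rewrite hD)).
pose chi (t : 'I_M) := sgn (\sum_(i < K) c i * ((t %/ 2 ^ i %% 2)%N%:R : 'F_2)).
have hW : walsh (gc_fun a c) u = \sum_(t < M) chi t * (D t)%:~R.
  rewrite /walsh (partition_big lo xpredT) //=; apply: eq_bigr => t _.
  rewrite /D rmorph_sum mulr_sumr; apply: eq_bigr => x /eqP <-.
  rewrite /gc_fun -addrA sgnD; congr (_ * _); last by rewrite sgnE.
  rewrite /chi; congr sgn; apply: eq_bigr => i _; congr (_ * _).
  by rewrite /= /low (bits_get (hdig x) (ltn_ord i)) F2_natr.
have [s hs1 hs0] : exists2 s, v s * v s = 1 & forall t, t != s -> v t = 0.
  case: (pickP (fun s => v s != 0)) => [s hsv|hnone]; last first.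
    move: hs; rewrite big1 // => t _; have := hnone t => /= /negbFE /eqP ->.
    by rewrite expr0n.
  move: hs; rewrite (bigD1 s) //= => hs.
  have r0 : 0 <= \sum_(t < M | t != s) v t ^+ 2 by apply: sumr_ge0 => t _; exact: sqr_ge0.
  move: hs r0 hsv; rewrite expr2.
  set r := \sum_(t < M | t != s) v t ^+ 2 => hs r0 hsv.
  have hr : r = 0 by nia.
  exists s; first by nia.
  move=> t ts; move: hr; rewrite /r => /eqP; rewrite psumr_eq0; last by move=> i _; exact: sqr_ge0.
  by move=> /allP /(_ t (mem_index_enum t)); rewrite ts /= sqrf_eq0 => /eqP.
have sgn1 : forall b, `|sgn b| = 1 by move=> b; rewrite /sgn normrX normrN1 expr1n.
rewrite hW (bigD1 s) //= big1 ?addr0; last first.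
  by move=> t ht; rewrite hv hs0 // mulr0 rmorph0 mulr0.
rewrite hv rmorphM /= normrM sgn1 mul1r normrM rmorphXn /= normrX.
have -> : `|((v s)%:~R : algC)| = 1.
  have : v s ^+ 2 == 1 by rewrite expr2 hs1.
  by rewrite sqrf_eq1 => /orP [] /eqP ->; rewrite ?rmorph1 ?rmorphN1 ?normrN1 ?normr1.
have e : (2%:R ^+ n : algC) = (2%:R ^+ n./2) ^+ 2 by rewrite -exprM mulnC -hn2.
rewrite e sqrCK; last by rewrite exprn_ge0 // ler0n.
by rewrite mulr1 normr_nat.
Qed.
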